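(* Let $\tilde{x}$, $F$ and $\bar{x}=F(\bar{y})=\tilde{x}-\beta\bar{y}$ be as in the context (all depending on $\bar{y}>0$), and let $$y^*=\frac{1}{\beta(\rho+2\kappa)}\Big((\mu-\rho c)(\rho+\kappa)-\rho\frac{\psi(\mu)}{\psi'(\mu)}\Big).$$ Consider the line of means $\{(\mu-\beta y,y):y\in[0,\bar{y}]\}$. Then: (1) if $F(0)>\mu$, the line of means does not meet the installation region, i.e. $\mu-\beta y<F(y)$ for all $y\in[0,\bar{y}]$; (2) if $F(0)\leq\mu$ and $\bar{y}\geq y^*$, the line of means meets the free boundary, i.e. there exists $y\in[0,\bar{y}]$ with $F(y)=\mu-\beta y$; (3) if $\bar{y}\leq y^*$, the line of means meets the installation region at its upper bound $y=\bar{y}$, i.e. $\mu-\beta\bar{y}\geq\bar{x}$.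
   Context: Fix constants $\mu\in\mathbb{R}$, $\kappa>0$, $\sigma>0$, $\rho>0$, $\beta>0$, $c\geq0$, $\bar{y}>0$. Let $D_\alpha(x)=\frac{e^{-x^2/4}}{\Gamma(-\alpha)}\int_0^\infty t^{-\alpha-1}e^{-t^2/2-xt}dt$ ($\alpha<0$) and $\psi(x)=e^{\frac{\kappa(x-\mu)^2}{2\sigma^2}}D_{-\rho/\kappa}\big(-\frac{x-\mu}{\sigma}\sqrt{2\kappa}\big)$, the strictly increasing positive solution of $\frac{\sigma^2}{2}u''+\kappa(\mu-x)u'-\rho u=0$. Let $\tilde{R}(x,y)=\frac{\mu\kappa+\rho x-\beta(\rho+2\kappa)y}{\rho(\rho+\kappa)}$, $Q_k(z)=\psi^{(k)}(z)\psi^{(k+2)}(z)-\psi^{(k+1)}(z)^2$. Let $\tilde{x}=\tilde{x}(\bar{y})$ be the unique real zero of $H(x)=\psi'(x)(c-\tilde{R}(x,\bar{y}))+(\rho+\kappa)^{-1}\psi(x)$. Let $D(y,z)=\psi(z)[(\rho+\kappa)(c-\tilde{R}(z,y))Q_1(z)+Q_0'(z)]$, $N(y,z)=Q_0(z)\big(\frac{\rho+2\kappa}{\rho}\psi'(z)+(\rho+\kappa)(c-\tilde{R}(z,y))\psi''(z)+\psi'(z)\big)$, $\mathcal{G}=\beta N/D$. Let $\tilde{F}$ be the unique solution on $[0,\bar{y}]$ of $\tilde{F}'(y)=\mathcal{G}(y,\tilde{F}(y))$ with $\tilde{F}(\bar{y})=\tilde{x}$, and $F(y)=\tilde{F}(y)-\beta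 y$ (strictly increasing, the free boundary). The installation region is $\{(x,y):y\in[0,\bar{y}),x\geq F(y)\}$. *)

(* Defs.v *)
From Stdlib Require Import Reals.
From Coquelicot Require Import Coquelicot.
Open Scope R_scope.

Definition Gamma (s : R) : R :=
  RInt_gen (fun t => Rpower t (s - 1) * exp (- t)) (at_right 0) (Rbar_locally p_infty).

(* Parabolic cylinder function, integral representation (alpha < 0):
   D_alpha(x) = e^{-x^2/4}/Gamma(-alpha) * int_0^oo t^{-alpha-1} e^{-t^2/2 - x t} dt *)
Definition Dpar (alpha x : R) : R :=
  exp (- x ^ 2 / 4) / Gamma (- alpha) *
  RInt_gen (fun t => Rpower t (- alpha - 1) * exp (- t ^ 2 / 2 - x * t))
           (at_right 0) (Rbar_locally p_infty).

Definition psi (mu kappa sigma rho : R) (x : R) : R :=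
  exp (kappa * (x - mu) ^ 2 / (2 * sigma ^ 2)) *
  Dpar (- rho / kappa) (- (x - mu) / sigma * sqrt (2 * kappa)).

Definition dpsi (mu kappa sigma rho : R) (k : nat) (x : R) : R :=
  Derive_n (psi mu kappa sigma rho) k x.

Definition Qk (mu kappa sigma rho : R) (k : nat) (z : R) : R :=
  dpsi mu kappa sigma rho k z * dpsi mu kappa sigma rho (k + 2) z
  - (dpsi mu kappa sigma rho (k + 1) z) ^ 2.

Definition Rtilde (mu kappa rho beta : R) (x y : R) : R :=
  (mu * kappa + rho * x - beta * (rho + 2 * kappa) * y) / (rho * (rho + kappa)).

Definition Hfun (mu kappa sigma rho beta c ybar : R) (x : R) : R :=
  dpsi mu kappa sigma rho 1 x * (c - Rtilde mu kappa rho beta x ybar)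
  + psi mu kappa sigma rho x / (rho + kappa).

Definition Dfun (mu kappa sigma rho beta c : R) (y z : R) : R :=
  psi mu kappa sigma rho z *
  ((rho + kappa) * (c - Rtilde mu kappa rho beta z y) * Qk mu kappa sigma rho 1 z
   + Derive (Qk mu kappa sigma rho 0) z).

Definition Nfun (mu kappa sigma rho beta c : R) (y z : R) : R :=
  Qk mu kappa sigma rho 0 z *
  ((rho + 2 * kappa) / rho * dpsi mu kappa sigma rho 1 z
   + (rho + kappa) * (c - Rtilde mu kappa rho beta z y) * dpsi mu kappa sigma rho 2 z
   + dpsi mu kappa sigma rho 1 z).

Definition Gfun (mu kappa sigma rho beta c : R) (y z : R) : R :=
  beta * Nfun mu kappa sigma rho beta c y z / Dfun mu kappa sigma rho beta c y z.

Definition ystar (mu kappa sigma rho beta c : R) : R :=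
  1 / (beta * (rho + 2 * kappa)) *
  ((mu - rho * c) * (rho + kappa)
   - rho * (psi mu kappa sigma rho mu / dpsi mu kappa sigma rho 1 mu)).

(* Main.v *)
Require Import Defs.
From Stdlib Require Import Reals Lra FunctionalExtensionality Ranalysis5.
From Coquelicot Require Import Coquelicot.
Open Scope R_scope.

Lemma Rpower_pos t c : 0 < Rpower t c.
Proof. unfold Rpower; apply exp_pos. Qed.

Lemma cont_Rpower_exp (c : R) (q : R -> R) t :
  0 < t -> (forall t, ex_derive q t) ->
  continuous (fun t => Rpower t c * exp (q t)) t.
Proof.
  intros Ht Hq. apply (ex_derive_continuous (K:=R_AbsRing) (V:=R_NormedModule)). unfold Rpower.
  apply ex_derive_mult.
  - apply (ex_derive_comp exp (fun t => c * ln t)).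
    + apply ex_derive_Reals_1. apply derivable_pt_exp.
    + auto_derive. exact Ht.
  - apply (ex_derive_comp exp q).
    + apply ex_derive_Reals_1. apply derivable_pt_exp.
    + apply Hq.
Qed.

Lemma ln_le_lin c t : 1 <= t -> c * ln t <= t / 2 + (Rabs c + 1) * (ln (2 * (Rabs c + 1)) - 1).
Proof.
  intros Ht. set (C := Rabs c + 1).
  assert (HC : 0 < C) by (unfold C; pose proof (Rabs_pos c); lra).
  assert (Hl0 : 0 <= ln t) by (rewrite <- ln_1; apply ln_le; lra).
  assert (H1 : c * ln t <= C * ln t).
  { apply Rmult_le_compat_r; auto. unfold C; pose proof (Rle_abs c); lra. }
  assert (H2 : ln t = ln (t / (2 * C)) + ln (2 * C)).
  { rewrite <- ln_mult. f_equal. field. lra. apply Rdiv_lt_0_compat; lra. lra. }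
  assert (H3 : ln (t / (2 * C)) <= t / (2 * C) - 1).
  { assert (Hp : 0 < t / (2 * C)) by (apply Rdiv_lt_0_compat; lra).
    pose proof (exp_ineq1_le (t / (2 * C) - 1)).
    rewrite <- (ln_exp (t / (2 * C) - 1)). apply ln_le; lra. }
  assert (C * ln t <= C * (t / (2 * C) - 1 + ln (2 * C))).
  { rewrite H2. apply Rmult_le_compat_l; lra. }
  assert (C * (t / (2 * C) - 1 + ln (2 * C)) = t/2 + C * (ln (2 * C) - 1)) by (field; lra).
  lra.
Qed.

Lemma exp_le_exp_ x y : x <= y -> exp x <= exp y.
Proof. intros [H|H]. left; apply exp_increasing; auto. subst; lra. Qed.

Lemma Rpower_1l y : Rpower 1 y = 1.
Proof. unfold Rpower. rewrite ln_1, Rmult_0_r. apply exp_0. Qed.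

Section Ex.
Variable f : R -> R.
Hypothesis fc : forall t, 0 < t -> continuous f t.
Hypothesis fpos : forall t, 0 < t -> 0 <= f t.

Lemma exRI a b : 0 < a -> 0 < b -> ex_RInt f a b.
Proof.
  intros Ha Hb. apply (ex_RInt_continuous (V:=R_CompleteNormedModule)). intros z Hz. apply fc.
  assert (0 < Rmin a b) by (apply Rmin_glb_lt; auto). lra.
Qed.

Lemma mono_int a x y b : 0 < a -> a <= x -> x <= y -> y <= b -> RInt f x y <= RInt f a b.
Proof.
  intros Ha H1 H2 H3.
  assert (E : RInt f a b = RInt f a x + RInt f x y + RInt f y b).
  { rewrite <- (RInt_Chasles f a x b) by (apply exRI; lra).
    rewrite <- (RInt_Chasles f x y b) by (apply exRI; lra).
    unfold plus; simpl. ring. }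
  assert (0 <= RInt f a x) by (apply RInt_ge_0; [lra| apply exRI; lra | intros; apply fpos; lra]).
  assert (0 <= RInt f y b) by (apply RInt_ge_0; [lra| apply exRI; lra | intros; apply fpos; lra]).
  lra.
Qed.

Variables (b M : R).
Hypothesis Hb : -1 < b.
Hypothesis Hlow : forall t, 0 < t <= 1 -> f t <= M * Rpower t b.
Hypothesis Hhigh : forall t, 1 <= t -> f t <= M * exp (- t / 2).

Lemma int_low x : 0 < x <= 1 -> RInt f x 1 <= M / (b + 1).
Proof.
  intros Hx.
  assert (Hd : forall t, Rmin x 1 <= t <= Rmax x 1 ->
     is_derive (fun t => M / (b+1) * Rpower t (b + 1)) t (M * Rpower t b)).
  { intros t Ht. rewrite Rmin_left in Ht by lra. rewrite Rmax_right in Ht by lra.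
    apply (is_derive_ext (fun t => M / (b+1) * Rpower t (b + 1))). reflexivity.
    replace (M * Rpower t b) with (M / (b+1) * ((b+1) * Rpower t (b + 1 - 1))).
    apply is_derive_scal. apply is_derive_Reals. apply derivable_pt_lim_power. lra.
    replace (b + 1 - 1) with b by ring. field. lra. }
  assert (Hc : forall t, Rmin x 1 <= t <= Rmax x 1 -> continuous (fun t => M * Rpower t b) t).
  { intros t Ht. rewrite Rmin_left in Ht by lra. rewrite Rmax_right in Ht by lra.
    apply (continuous_scal_r M (fun t => Rpower t b)).
    apply (ex_derive_continuous (K:=R_AbsRing) (V:=R_NormedModule)).
    eexists. apply is_derive_Reals. apply derivable_pt_lim_power. lra. }
  pose proof (is_RInt_derive _ _ x 1 Hd Hc) as HI.
  apply is_RInt_unique in HI.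
  assert (RInt f x 1 <= RInt (fun t => M * Rpower t b) x 1).
  { apply RInt_le. lra. apply exRI; lra. eexists; apply (is_RInt_derive _ _ x 1 Hd Hc).
    intros; apply Hlow; lra. }
  rewrite HI in H. unfold minus, plus, opp in H; simpl in H.
  rewrite Rpower_1l in H.
  assert (0 <= f 1) by (apply fpos; lra).
  assert (f 1 <= M) by (pose proof (Hlow 1 ltac:(lra)); rewrite Rpower_1l in H1; lra).
  assert (0 <= M / (b + 1) * Rpower x (b + 1)).
  { apply Rmult_le_pos. apply Rdiv_le_0_compat; lra. left; apply exp_pos. }
  lra.
Qed.

Lemma int_high y : 1 <= y -> RInt f 1 y <= 2 * M * exp (- 1 / 2).
Proof.
  intros Hy.
  assert (Hd : forall t, Rmin 1 y <= t <= Rmax 1 y ->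
     is_derive (fun t => - 2 * M * exp (- t / 2)) t (M * exp (- t / 2))).
  { intros t Ht. auto_derive. auto. lra. }
  assert (Hc : forall t, Rmin 1 y <= t <= Rmax 1 y -> continuous (fun t => M * exp (- t / 2)) t).
  { intros t Ht. apply (ex_derive_continuous (K:=R_AbsRing) (V:=R_NormedModule)). auto_derive. auto. }
  pose proof (is_RInt_derive _ _ 1 y Hd Hc) as HI.
  apply is_RInt_unique in HI.
  assert (RInt f 1 y <= RInt (fun t => M * exp (- t / 2)) 1 y).
  { apply RInt_le. lra. apply exRI; lra. eexists; apply (is_RInt_derive _ _ 1 y Hd Hc).
    intros; apply Hhigh; lra. }
  rewrite HI in H. unfold minus, plus, opp in H; simpl in H.
  assert (0 <= f 1) by (apply fpos; lra).
  assert (0 <= M).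
  { pose proof (Hlow 1 ltac:(lra)). rewrite Rpower_1l in H1. lra. }
  assert (0 <= 2 * M * exp (- y / 2)).
  { apply Rmult_le_pos. lra. left; apply exp_pos. }
  replace (-1/2) with (-(1)/2) by lra. lra.
Qed.

Definition Bd := M / (b + 1) + 2 * M * exp (- 1 / 2).

Lemma int_bound x y : 0 < x <= y -> RInt f x y <= Bd.
Proof.
  intros Hxy.
  set (x' := Rmin x 1). set (y' := Rmax y 1).
  assert (0 < x' <= 1) by (unfold x'; split; [apply Rmin_glb_lt; lra| apply Rmin_r]).
  assert (1 <= y') by (unfold y'; apply Rmax_r).
  assert (x' <= x) by apply Rmin_l. assert (y <= y') by apply Rmax_l.
  pose proof (mono_int x' x y y' ltac:(lra) ltac:(lra) ltac:(lra) ltac:(lra)).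
  rewrite <- (RInt_Chasles f x' 1 y') in H3 by (apply exRI; lra).
  pose proof (int_low x' H). pose proof (int_high y' H0).
  unfold plus in H3; simpl in H3. unfold Bd. lra.
Qed.

Lemma ex_gen : exists l, is_RInt_gen f (at_right 0) (Rbar_locally p_infty) l /\
   forall x y, 0 < x <= y -> RInt f x y <= l.
Proof.
  set (E := fun v => exists x y, 0 < x <= y /\ v = RInt f x y).
  assert (HB : bound E).
  { exists Bd. intros v [x [y [Hxy ->]]]. apply int_bound; auto. }
  assert (HE : exists v, E v) by (exists (RInt f 1 1); exists 1, 1; split; [lra|auto]).
  destruct (completeness E HB HE) as [l [Hub Hlub]].
  exists l. split.
  2:{ intros x y Hxy. apply Hub. exists x, y; auto. }
  intros P [eps HP]. simpl.
  assert (Hex : exists x0 y0, 0 < x0 <= y0 /\ l - eps < RInt f x0 y0).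
  { destruct (Classical_Prop.classic (exists x0 y0, 0 < x0 <= y0 /\ l - eps < RInt f x0 y0)) as [H|H]; auto.
    exfalso. assert (l <= l - eps).
    { apply Hlub. intros v [x [y [Hxy ->]]].
      destruct (Rle_dec (RInt f x y) (l - eps)); auto. exfalso; apply H; exists x, y; split; auto; lra. }
    destruct eps; simpl in *; lra. }
  destruct Hex as [x0 [y0 [Hxy0 Hl0]]].
  apply (Filter_prod _ _ _ (fun a => 0 < a <= x0) (fun b => y0 <= b)).
  - assert (Hx0 : 0 < x0) by lra.
    exists (mkposreal x0 Hx0). intros y Hy Hy0. simpl in *.
    unfold ball in Hy; simpl in Hy; unfold AbsRing_ball, abs, minus, plus, opp in Hy; simpl in Hy.
    rewrite Ropp_0, Rplus_0_r in Hy. apply Rabs_def2 in Hy. lra.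
  - exists y0. intros; lra.
  - intros a b' Ha Hb'. simpl. exists (RInt f a b'). split.
    + apply (RInt_correct (V:=R_CompleteNormedModule)). apply exRI; lra.
    + apply HP. unfold ball; simpl; unfold AbsRing_ball, abs, minus, plus, opp; simpl.
      assert (RInt f x0 y0 <= RInt f a b') by (apply mono_int; lra).
      assert (RInt f a b' <= l) by (apply Hub; exists a, b'; split; [lra|auto]).
      apply Rabs_def1; lra.
Qed.
End Ex.

Notation IG f l := (is_RInt_gen f (at_right 0) (Rbar_locally p_infty) l).

Lemma fp_le : filter_prod (at_right 0) (Rbar_locally p_infty)
   (fun ab => 0 < fst ab /\ fst ab <= snd ab).
Proof.
  apply (Filter_prod _ _ _ (fun a => 0 < a < 1) (fun b => 1 < b)).
  - exists (mkposreal 1 Rlt_0_1). intros y Hy Hy0. simpl in *.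
    unfold ball in Hy; simpl in Hy; unfold AbsRing_ball, abs, minus, plus, opp in Hy; simpl in Hy.
    rewrite Ropp_0, Rplus_0_r in Hy. apply Rabs_def2 in Hy. lra.
  - exists 1. intros; lra.
  - intros x y Hx Hy; simpl; lra.
Qed.

Lemma fp_imp (Q : R * R -> Prop) : (forall ab, 0 < fst ab <= snd ab -> Q ab) ->
  filter_prod (at_right 0) (Rbar_locally p_infty) Q.
Proof.
  intros HQ. destruct fp_le as [Q1 R1 H1 H2 H3].
  apply (Filter_prod _ _ _ Q1 R1 H1 H2). intros x y Hx Hy. apply HQ. apply H3; auto.
Qed.

Lemma gen_norm (f g : R -> R) (lf lg : R) : IG f lf -> IG g lg ->
  (forall t, 0 < t -> Rabs (f t) <= g t) -> Rabs lf <= lg.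
Proof.
  intros Hf Hg Hfg.
  apply (RInt_gen_norm (V:=R_CompleteNormedModule) (Fa:=at_right 0) (Fb:=Rbar_locally p_infty) f g lf lg).
  - apply fp_imp. intros ab [H1 H2]; exact H2.
  - apply fp_imp. intros ab [H1 H2] x Hx. apply Hfg. lra.
  - exact Hf.
  - exact Hg.
Qed.

Lemma IG_lin (f1 f2 : R -> R) (l1 l2 a b : R) : IG f1 l1 -> IG f2 l2 ->
  IG (fun t => a * f1 t + b * f2 t) (a * l1 + b * l2).
Proof.
  intros H1 H2.
  pose proof (is_RInt_gen_scal (V:=R_NormedModule) (Fa:=at_right 0) (Fb:=Rbar_locally p_infty) f1 a l1 H1) as G1.
  pose proof (is_RInt_gen_scal (V:=R_NormedModule) (Fa:=at_right 0) (Fb:=Rbar_locally p_infty) f2 b l2 H2) as G2.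
  exact (is_RInt_gen_plus (V:=R_NormedModule) (Fa:=at_right 0) (Fb:=Rbar_locally p_infty) _ _ _ _ G1 G2).
Qed.

Lemma IG_ext (f g : R -> R) (l : R) : (forall t, 0 < t -> f t = g t) -> IG f l -> IG g l.
Proof.
  intros E H. apply (is_RInt_gen_ext (V:=R_NormedModule) (Fa:=at_right 0) (Fb:=Rbar_locally p_infty) f g); auto.
  apply fp_imp. intros ab [H1 H2] x Hx. apply E.
  rewrite Rmin_left in Hx by lra. lra.
Qed.

Definition kf c u t := Rpower t c * exp (- t ^ 2 / 2 + u * t).
Definition K c u := RInt_gen (kf c u) (at_right 0) (Rbar_locally p_infty).

Lemma kf_pos c u t : 0 < kf c u t.
Proof. unfold kf. apply Rmult_lt_0_compat. apply Rpower_pos. apply exp_pos. Qed.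

Lemma kf_cont c u t : 0 < t -> continuous (kf c u) t.
Proof. intros Ht. unfold kf. apply (cont_Rpower_exp c (fun t => - t ^ 2 / 2 + u * t)); auto.
  intros; auto_derive; auto. Qed.

Lemma K_spec c u : -1 < c -> IG (kf c u) (K c u) /\
   forall x y, 0 < x <= y -> RInt (kf c u) x y <= K c u.
Proof.
  intros Hc.
  set (Kc := (Rabs c + 1) * (ln (2 * (Rabs c + 1)) - 1)).
  set (M := exp (Rabs u) + exp (Kc + (u + 1) ^ 2 / 2)).
  destruct (ex_gen (kf c u) (kf_cont c u) (fun t _ => Rlt_le _ _ (kf_pos c u t)) c M Hc) as [l [H1 H2]].
  - intros t Ht. unfold kf, M. rewrite Rmult_comm.
    apply Rmult_le_compat_r. left; apply Rpower_pos.
    assert (exp (- t ^ 2 / 2 + u * t) <= exp (Rabs u)).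
    { apply exp_le_exp_. destruct (Rle_dec 0 u).
      - rewrite Rabs_right by lra. nra.
      - rewrite Rabs_left by lra. nra. }
    pose proof (exp_pos (Kc + (u + 1) ^ 2 / 2)). lra.
  - intros t Ht. unfold kf, M, Rpower.
    rewrite <- exp_plus.
    pose proof (ln_le_lin c t Ht). fold Kc in H.
    assert (exp (c * ln t + (- t ^ 2 / 2 + u * t)) <= exp (Kc + (u + 1) ^ 2 / 2) * exp (- t / 2)).
    { rewrite <- exp_plus. apply exp_le_exp_. pose proof (pow2_ge_0 (t - u - 1)). nra. }
    pose proof (exp_pos (Rabs u)). pose proof (exp_pos (- t / 2)). nra.
  - assert (E : K c u = l) by (apply is_RInt_gen_unique; auto).
    rewrite E. auto.
Qed.

Lemma ineq1 y : 0 <= exp y - 1 - y <= y * (exp y - 1).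
Proof.
  pose proof (exp_ineq1_le y). pose proof (exp_ineq1_le (- y)).
  assert (exp (- y) * exp y = 1) by (rewrite <- exp_plus; replace (-y + y) with 0 by ring; apply exp_0).
  pose proof (exp_pos y). split. lra.
  assert (0 <= (exp (- y) - (1 - y)) * exp y) by (apply Rmult_le_pos; lra). nra.
Qed.

Lemma ineq2 y : Rabs (exp y - 1) <= Rabs y * exp (Rabs y).
Proof.
  pose proof (exp_ineq1_le y). pose proof (exp_ineq1_le (- y)).
  assert (exp (- y) * exp y = 1) by (rewrite <- exp_plus; replace (-y + y) with 0 by ring; apply exp_0).
  pose proof (exp_pos y). pose proof (exp_pos (-y)).
  destruct (Rle_dec 0 y).
  - rewrite (Rabs_right y) by lra. rewrite Rabs_right by lra.
    assert (0 <= (exp (- y) - (1 - y)) * exp y) by (apply Rmult_le_pos; lra). nra.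
  - rewrite (Rabs_left y) by lra. assert (exp y <= 1) by (rewrite <- exp_0; apply exp_le_exp_; lra). rewrite Rabs_left1 by lra.
    assert (0 <= - y * (exp (- y) - 1)) by (apply Rmult_le_pos; lra). nra.
Qed.

Lemma kf_shift c u h t : kf c (u + h) t = kf c u t * exp (h * t).
Proof. unfold kf. rewrite Rmult_assoc, <- exp_plus. f_equal. f_equal. ring. Qed.

Lemma kf_succ c u t : 0 < t -> kf (c + 1) u t = t * kf c u t.
Proof. intros Ht. unfold kf. rewrite Rpower_plus, Rpower_1 by auto. ring. Qed.

Lemma K_is c u : -1 < c -> IG (kf c u) (K c u).
Proof. intros Hc; apply (K_spec c u Hc). Qed.

Lemma K_pos c u : -1 < c -> 0 < K c u.
Proof.
  intros Hc. destruct (K_spec c u Hc) as [_ H].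
  assert (0 < RInt (kf c u) 1 2).
  { apply RInt_gt_0. lra. intros; apply kf_pos. intros; apply kf_cont; lra. }
  pose proof (H 1 2 ltac:(lra)). lra.
Qed.

Lemma K_mono c u0 u : -1 < c -> u0 <= u -> K c u0 <= K c u.
Proof.
  intros Hc Hu.
  pose proof (gen_norm (kf c u0) (kf c u) _ _ (K_is c u0 Hc) (K_is c u Hc)) as G.
  assert (Rabs (K c u0) <= K c u).
  { apply G. intros t Ht. rewrite Rabs_right by (left; apply kf_pos).
    unfold kf. apply Rmult_le_compat_l. left; apply Rpower_pos.
    apply exp_le_exp_. nra. }
  pose proof (Rle_abs (K c u0)). lra.
Qed.

Lemma K_cont_bound d u h : -1 < d -> Rabs h <= 1 ->
  Rabs (K d (u + h) - K d u) <= Rabs h * K (d + 1) (u + 1).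
Proof.
  intros Hd Hh.
  pose proof (IG_lin _ _ _ _ 1 (-1) (K_is d (u + h) Hd) (K_is d u Hd)) as G1.
  pose proof (IG_lin _ _ _ _ (Rabs h) 0 (K_is (d + 1) (u + 1) ltac:(lra)) (K_is d u Hd)) as G2.
  pose proof (gen_norm _ _ _ _ G1 G2) as G.
  replace (K d (u + h) - K d u) with (1 * K d (u + h) + -1 * K d u) by ring.
  replace (Rabs h * K (d + 1) (u + 1)) with (Rabs h * K (d + 1) (u + 1) + 0 * K d u) by ring.
  apply G. intros t Ht.
  rewrite kf_shift, kf_succ, kf_shift by auto.
  pose proof (kf_pos d u t) as Hk.
  replace (1 * (kf d u t * exp (h * t)) + -1 * kf d u t) with (kf d u t * (exp (h * t) - 1)) by ring.
  rewrite Rabs_mult, (Rabs_right (kf d u t)) by lra.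
  pose proof (ineq2 (h * t)) as I2.
  rewrite Rabs_mult, (Rabs_right t) in I2 by lra.
  assert (exp (Rabs h * t) <= exp (1 * t)) by (apply exp_le_exp_; apply Rmult_le_compat_r; lra).
  assert (Rabs (exp (h * t) - 1) <= Rabs h * t * exp (1 * t)).
  { eapply Rle_trans. exact I2. apply Rmult_le_compat_l. pose proof (Rabs_pos h); nra. auto. }
  pose proof (Rabs_pos (exp (h * t) - 1)).
  nra.
Qed.

Lemma K_deriv_bound c u h : -1 < c ->
  Rabs (K c (u + h) - K c u - h * K (c + 1) u) <= h * (K (c + 1) (u + h) - K (c + 1) u).
Proof.
  intros Hc.
  pose proof (IG_lin _ _ _ _ 1 (-1) (K_is c (u + h) Hc) (K_is c u Hc)) as G0.
  pose proof (IG_lin _ _ _ _ 1 (- h) G0 (K_is (c + 1) u ltac:(lra))) as G1.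
  pose proof (IG_lin _ _ _ _ h (- h) (K_is (c + 1) (u + h) ltac:(lra)) (K_is (c + 1) u ltac:(lra))) as G2.
  pose proof (gen_norm _ _ _ _ G1 G2) as G.
  replace (K c (u + h) - K c u - h * K (c + 1) u) with
     (1 * (1 * K c (u + h) + -1 * K c u) + - h * K (c + 1) u) by ring.
  replace (h * (K (c + 1) (u + h) - K (c + 1) u)) with
     (h * K (c + 1) (u + h) + - h * K (c + 1) u) by ring.
  apply G. intros t Ht.
  rewrite !kf_succ, !kf_shift by auto.
  pose proof (kf_pos c u t) as Hk.
  pose proof (ineq1 (h * t)) as [I1 I2].
  replace (1 * (1 * (kf c u t * exp (h * t)) + -1 * kf c u t) + - h * (t * kf c u t))
    with (kf c u t * (exp (h * t) - 1 - h * t)) by ring.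
  rewrite Rabs_mult, (Rabs_right (kf c u t)) by lra.
  rewrite (Rabs_right (exp (h * t) - 1 - h * t)) by lra.
  replace (h * (t * (kf c u t * exp (h * t))) + - h * (t * kf c u t)) with
     (kf c u t * ((h * t) * (exp (h * t) - 1))) by ring.
  apply Rmult_le_compat_l; lra.
Qed.

Lemma K_deriv c u : -1 < c -> is_derive (K c) u (K (c + 1) u).
Proof.
  intros Hc. apply is_derive_Reals. intros eps Heps.
  set (L := K (c + 1 + 1) (u + 1)).
  assert (HL : 0 < L) by (apply K_pos; lra).
  assert (Hd : 0 < Rmin 1 (eps / (L + 1))).
  { apply Rmin_glb_lt. lra. apply Rdiv_lt_0_compat; lra. }
  exists (mkposreal _ Hd). intros h Hh0 Hh. simpl in Hh.
  assert (Hh1 : Rabs h <= 1) by (pose proof (Rmin_l 1 (eps / (L + 1))); lra).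
  assert (Hh2 : Rabs h < eps / (L + 1)) by (pose proof (Rmin_r 1 (eps / (L + 1))); lra).
  pose proof (K_deriv_bound c u h Hc) as DB.
  pose proof (K_cont_bound (c + 1) u h ltac:(lra) Hh1) as CB. fold L in CB.
  set (A := K c (u + h) - K c u - h * K (c + 1) u) in *.
  set (B := K (c + 1) (u + h) - K (c + 1) u) in *.
  assert (HA : Rabs A <= Rabs h * Rabs B).
  { eapply Rle_trans. exact DB. rewrite <- Rabs_mult. apply Rle_abs. }
  assert (Habs : 0 < Rabs h) by (apply Rabs_pos_lt; auto).
  replace ((K c (u + h) - K c u) / h - K (c + 1) u) with (A / h) by (unfold A; field; auto).
  unfold Rdiv. rewrite Rabs_mult, Rabs_inv.
  assert (Rabs A * / Rabs h <= Rabs B).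
  { apply (Rmult_le_reg_r (Rabs h)); auto. rewrite Rmult_assoc, Rinv_l by lra. lra. }
  assert (Rabs h * L < eps).
  { apply (Rmult_lt_compat_r L) in Hh2; auto. unfold Rdiv in Hh2.
    assert (eps * / (L + 1) * L < eps).
    { apply (Rmult_lt_reg_r (L + 1)). lra. field_simplify; nra. }
    lra. }
  lra.
Qed.

Lemma Gamma_pos a : 0 < a -> 0 < Gamma a.
Proof.
  intros Ha. unfold Gamma.
  set (g := fun t => Rpower t (a - 1) * exp (- t)).
  set (Kc := (Rabs (a - 1) + 1) * (ln (2 * (Rabs (a - 1) + 1)) - 1)).
  assert (gc : forall t, 0 < t -> continuous g t).
  { intros t Ht. apply (cont_Rpower_exp (a - 1) (fun t => - t)); auto. intros; auto_derive; auto. }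
  assert (gp : forall t, 0 < t -> 0 <= g t).
  { intros; unfold g. left; apply Rmult_lt_0_compat. apply Rpower_pos. apply exp_pos. }
  destruct (ex_gen g gc gp (a - 1) (1 + exp Kc) ltac:(lra)) as [l [H1 H2]].
  - intros t Ht. unfold g. rewrite Rmult_comm. apply Rmult_le_compat_r. left; apply Rpower_pos.
    assert (exp (- t) <= 1) by (rewrite <- exp_0; apply exp_le_exp_; lra).
    pose proof (exp_pos Kc). lra.
  - intros t Ht. unfold g, Rpower. rewrite <- exp_plus.
    pose proof (ln_le_lin (a - 1) t Ht). fold Kc in H.
    assert (exp ((a - 1) * ln t + - t) <= exp Kc * exp (- t / 2)).
    { rewrite <- exp_plus. apply exp_le_exp_. lra. }
    pose proof (exp_pos (- t / 2)). nra.
  - assert (E : RInt_gen g (at_right 0) (Rbar_locally p_infty) = l)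
      by (apply (is_RInt_gen_unique (V:=R_CompleteNormedModule)); auto).
    fold g. rewrite E.
    assert (0 < RInt g 1 2).
    { apply RInt_gt_0. lra. intros; unfold g; apply Rmult_lt_0_compat. apply Rpower_pos. apply exp_pos.
      intros; apply gc; lra. }
    pose proof (H2 1 2 ltac:(lra)). lra.
Qed.

Lemma psi_rep mu kappa sigma rho x : 0 < kappa -> 0 < sigma ->
  psi mu kappa sigma rho x =
  / Gamma (rho / kappa) * K (rho / kappa - 1) (sqrt (2 * kappa) / sigma * (x - mu)).
Proof.
  intros Hk Hs. unfold psi, Dpar.
  replace (- (- rho / kappa)) with (rho / kappa) by (field; lra).
  set (w := - (x - mu) / sigma * sqrt (2 * kappa)).
  assert (Ef : (fun t => Rpower t (rho / kappa - 1) * exp (- t ^ 2 / 2 - w * t)) =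
               kf (rho / kappa - 1) (sqrt (2 * kappa) / sigma * (x - mu))).
  { apply functional_extensionality; intro t. unfold kf. f_equal. f_equal. unfold w. field. lra. }
  rewrite Ef. fold (K (rho / kappa - 1) (sqrt (2 * kappa) / sigma * (x - mu))).
  assert (Hr : sqrt (2 * kappa) * sqrt (2 * kappa) = 2 * kappa) by (apply sqrt_sqrt; lra).
  assert (E2 : exp (kappa * (x - mu) ^ 2 / (2 * sigma ^ 2)) * exp (- w ^ 2 / 4) = 1).
  { rewrite <- exp_plus. rewrite <- exp_0. f_equal. unfold w.
    replace ((- (x - mu) / sigma * sqrt (2 * kappa)) ^ 2) with
      ((x - mu) ^ 2 / sigma ^ 2 * (sqrt (2 * kappa) * sqrt (2 * kappa))) by (field; lra).
    rewrite Hr. field. lra. }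
  match goal with |- exp ?A * (exp ?B / ?G * ?KK) = _ =>
    transitivity (exp A * exp B * (/ G * KK)); [unfold Rdiv; ring|] end.
  rewrite E2. ring.
Qed.
Lemma K_comp_deriv c s m x : -1 < c ->
  is_derive (fun x => K c (s * (x - m))) x (s * K (c + 1) (s * (x - m))).
Proof.
  intros Hc.
  assert (Hl : is_derive (fun x => s * (x - m)) x s) by (auto_derive; auto; ring).
  exact (is_derive_comp (K c) (fun x => s * (x - m)) x _ s (K_deriv c _ Hc) Hl).
Qed.

Lemma deriv_combo (f1 f0 : R -> R) d1 d0 x A B k :
  is_derive f1 x d1 -> is_derive f0 x d0 ->
  is_derive (fun x => f1 x * (A + B * x) + f0 x * k) x (d1 * (A + B * x) + f1 x * B + d0 * k).
Proof.
  intros D1 D0.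
  assert (DL : is_derive (fun x => A + B * x) x B) by (auto_derive; auto; ring).
  pose proof (is_derive_plus (K:=R_AbsRing) (V:=R_NormedModule) _ _ x _ _
     (is_derive_mult _ _ x _ _ D1 DL Rmult_comm)
     (is_derive_mult _ _ x _ _ D0 (is_derive_const k x) Rmult_comm)) as H.
  match type of H with is_derive _ _ ?v =>
    replace (d1 * (A + B * x) + f1 x * B + d0 * k) with v end.
  exact H.
  unfold plus, mult, zero; simpl. ring.
Qed.

Lemma cont_of_deriv (f : R -> R) x l : is_derive f x l -> continuity_pt f x.
Proof. intros H. apply derivable_continuous_pt. exists l. apply is_derive_Reals. exact H. Qed.
Theorem proposition5p1
  (mu kappa sigma rho beta c ybar : R)
  (Hkappa : 0 < kappa) (Hsigma : 0 < sigma) (Hrho : 0 < rho) (Hbeta : 0 < beta)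
  (Hc : 0 <= c) (Hybar : 0 < ybar)
  (xt : R)
  (Hxt : Hfun mu kappa sigma rho beta c ybar xt = 0)
  (Hxt_uniq : forall x, Hfun mu kappa sigma rho beta c ybar x = 0 -> x = xt)
  (Ft : R -> R)
  (HFt_end : Ft ybar = xt)
  (HFt_cont : forall y, 0 <= y <= ybar -> continuous Ft y)
  (HFt_ode : forall y, 0 < y < ybar ->
       is_derive Ft y (Gfun mu kappa sigma rho beta c y (Ft y)))
  (HFt_uniq : forall g : R -> R, g ybar = xt ->
       (forall y, 0 <= y <= ybar -> continuous g y) ->
       (forall y, 0 < y < ybar -> is_derive g y (Gfun mu kappa sigma rho beta c y (g y))) ->
       forall y, 0 <= y <= ybar -> g y = Ft y)
  (HF_incr : forall y1 y2, 0 <= y1 -> y1 < y2 -> y2 <= ybar ->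
       Ft y1 - beta * y1 < Ft y2 - beta * y2) :
  let F := fun y => Ft y - beta * y in
  let ys := ystar mu kappa sigma rho beta c in
  (F 0 > mu -> forall y, 0 <= y <= ybar -> mu - beta * y < F y) /\
  (F 0 <= mu -> ybar >= ys -> exists y, 0 <= y <= ybar /\ F y = mu - beta * y) /\
  (ybar <= ys -> mu - beta * ybar >= F ybar).
Proof.
  intros F ys.
  pose (a := rho / kappa).
  assert (Ha : 0 < a) by (unfold a; apply Rdiv_lt_0_compat; lra).
  pose (s := sqrt (2 * kappa) / sigma).
  assert (Hs : 0 < s) by (unfold s; apply Rdiv_lt_0_compat; [apply sqrt_lt_R0; lra | lra]).
  pose (g := / Gamma a).
  assert (Hg : 0 < g) by (unfold g; apply Rinv_0_lt_compat; apply Gamma_pos; auto).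
  pose (P := fun x => g * K (a - 1) (s * (x - mu))).
  pose (P1 := fun x => g * (s * K a (s * (x - mu)))).
  pose (P2 := fun x => g * (s * (s * K (a + 1) (s * (x - mu))))).
  assert (HP : forall x, 0 < P x) by (intros; unfold P; apply Rmult_lt_0_compat; auto; apply K_pos; lra).
  assert (HP1 : forall x, 0 < P1 x) by (intros; unfold P1; apply Rmult_lt_0_compat; auto; apply Rmult_lt_0_compat; auto; apply K_pos; lra).
  assert (HP2 : forall x, 0 < P2 x) by (intros; unfold P2; apply Rmult_lt_0_compat; auto; apply Rmult_lt_0_compat; auto; apply Rmult_lt_0_compat; auto; apply K_pos; lra).
  assert (HP2m : forall x y, x <= y -> P2 x <= P2 y).
  { intros x y Hxy. unfold P2. repeat (apply Rmult_le_compat_l; [lra|]).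
    apply K_mono. lra. apply Rmult_le_compat_l; lra. }
  assert (Hpsi : forall x, psi mu kappa sigma rho x = P x).
  { intros x. unfold P, g, a, s. apply psi_rep; auto. }
  assert (DP : forall x, is_derive P x (P1 x)).
  { intros x. unfold P, P1. apply is_derive_scal.
    pose proof (K_comp_deriv (a - 1) s mu x ltac:(lra)) as H.
    replace (a - 1 + 1) with a in H by ring. exact H. }
  assert (DP1 : forall x, is_derive P1 x (P2 x)).
  { intros x. unfold P1, P2. apply is_derive_scal.
    apply (is_derive_ext (fun x => s * K a (s * (x - mu)))). reflexivity.
    apply is_derive_scal. apply K_comp_deriv. lra. }
  assert (Hdpsi : forall x, dpsi mu kappa sigma rho 1 x = P1 x).
  { intros x. unfold dpsi. simpl. apply is_derive_unique.
    apply (is_derive_ext P). intros t. simpl. rewrite Hpsi. reflexivity. apply DP. }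
  set (Rt := fun x => Rtilde mu kappa rho beta x ybar).
  pose (Hh := fun x => P1 x * (c - Rt x) + P x / (rho + kappa)).
  assert (HE : forall x, Hfun mu kappa sigma rho beta c ybar x = Hh x).
  { intros x. unfold Hfun, Hh, Rt. rewrite Hpsi, Hdpsi. reflexivity. }
  pose (x0 := (c * rho * (rho + kappa) - mu * kappa + beta * (rho + 2 * kappa) * ybar) / rho).
  assert (HRt : forall x, c - Rt x = (x0 - x) / (rho + kappa)).
  { intros x. unfold Rt, Rtilde, x0. field. lra. }
  assert (DH : forall x, is_derive Hh x (P2 x * (c - Rt x))).
  { intros x.
    pose proof (deriv_combo P1 P (P2 x) (P1 x) x (x0 / (rho + kappa)) (- / (rho + kappa)) (/ (rho + kappa)) (DP1 x) (DP x)) as H.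
    apply (is_derive_ext (fun x => P1 x * (x0 / (rho + kappa) + - / (rho + kappa) * x) + P x * / (rho + kappa))).
    { intros t. change (P1 t * (x0 / (rho + kappa) + - / (rho + kappa) * t) + P t * / (rho + kappa) = Hh t).
      unfold Hh. rewrite HRt. field. lra. }
    replace (P2 x * (c - Rt x)) with
      (P2 x * (x0 / (rho + kappa) + - / (rho + kappa) * x) + P1 x * - / (rho + kappa) + P1 x * / (rho + kappa)).
    exact H. rewrite HRt. field. lra. }
  assert (CH : continuity Hh) by (intros x; apply (cont_of_deriv _ _ _ (DH x))).
  assert (Hys : ys = 1 / (beta * (rho + 2 * kappa)) * ((mu - rho * c) * (rho + kappa) - rho * (P mu / P1 mu))).
  { unfold ys, ystar. rewrite Hpsi, Hdpsi. reflexivity. }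
  assert (Hmu : Hh mu = P1 mu * (beta * (rho + 2 * kappa)) * (ybar - ys) / (rho * (rho + kappa))).
  { rewrite Hys. unfold Hh, Rt, Rtilde. pose proof (HP1 mu). field. repeat split; try lra. }
  assert (Hzero : forall z, Hh z = 0 -> z = xt) by (intros z Hz; apply Hxt_uniq; rewrite HE; auto).
  assert (HxtH : Hh xt = 0) by (rewrite <- HE; auto).
  assert (Hcoef : 0 < P1 mu * (beta * (rho + 2 * kappa)) / (rho * (rho + kappa))).
  { pose proof (HP1 mu). apply Rdiv_lt_0_compat. apply Rmult_lt_0_compat; nra. nra. }
  split; [|split].
  -
    intros H0 y Hy. unfold F in *. destruct (Req_dec y 0) as [->|Hy0]. lra.
    pose proof (HF_incr 0 y ltac:(lra) ltac:(lra) ltac:(lra)). nra.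
  -
    intros H0 Hyb.
    assert (Hxm : mu <= xt).
    { destruct (Rle_dec mu xt) as [|Hlt]; auto. exfalso.
      assert (Hm0 : 0 <= Hh mu).
      { rewrite Hmu. unfold Rdiv. rewrite Rmult_assoc, (Rmult_comm (ybar - ys)), <- Rmult_assoc.
        apply Rmult_le_pos. left; exact Hcoef. lra. }
      destruct (Req_dec (Hh mu) 0) as [Hz|Hnz]. { apply Hzero in Hz. lra. }
      pose (x3 := Rmax mu (x0 + (rho + kappa))).
      pose (m := P2 x3).
      assert (Hm : 0 < m) by apply HP2.
      pose (x2 := x3 + (Rabs (Hh x3) + 1) / m).
      assert (Hx32 : x3 < x2).
      { unfold x2. pose proof (Rabs_pos (Hh x3)). assert (0 < (Rabs (Hh x3) + 1) / m) by (apply Rdiv_lt_0_compat; lra). lra. }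
      assert (Hx3 : mu <= x3 /\ x0 + (rho + kappa) <= x3) by (split; [apply Rmax_l|apply Rmax_r]).
      destruct (MVT_gen Hh x3 x2 (fun x => P2 x * (c - Rt x))) as [cc [Hcc Eq]].
      { intros; apply DH. }
      { intros; apply CH. }
      rewrite Rmin_left in Hcc by lra. rewrite Rmax_right in Hcc by lra.
      assert (Hc1 : c - Rt cc <= -1).
      { rewrite HRt. apply (Rmult_le_reg_r (rho + kappa)). lra. unfold Rdiv. rewrite Rmult_assoc, Rinv_l by lra. lra. }
      assert (HP2c : m <= P2 cc) by (apply HP2m; lra).
      assert (P2 cc * (c - Rt cc) <= - m) by nra.
      assert (Hneg : Hh x2 < 0).
      { assert (Hh x2 <= Hh x3 - m * (x2 - x3)) by nra.
        assert (m * (x2 - x3) = Rabs (Hh x3) + 1) by (unfold x2; field; lra).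
        pose proof (Rle_abs (Hh x3)). lra. }
      destruct (IVT (fun x => - Hh x) mu x2) as [z [Hz1 Hz2]].
      { intros x. apply continuity_pt_opp. apply CH. }
      lra. lra. lra.
      assert (z = xt) by (apply Hzero; lra). lra. }
    destruct (Req_dec (Ft 0) mu) as [E0|N0].
    { exists 0. split. lra. unfold F. lra. }
    destruct (Req_dec xt mu) as [E1|N1].
    { exists ybar. split. lra. unfold F. rewrite HFt_end. lra. }
    destruct (IVT_interv (fun y => Ft y - mu) 0 ybar) as [z [Hz1 Hz2]].
    { intros y Hy. apply continuity_pt_minus. apply continuity_pt_filterlim. apply HFt_cont; auto.
      apply continuity_pt_const. intros u v; reflexivity. }
    lra. unfold F in H0. lra. rewrite HFt_end. lra.
    exists z. split. lra. unfold F. lra.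
  -
    intros Hyb.
    assert (Hxm : xt <= mu).
    { destruct (Rle_dec xt mu) as [|Hlt]; auto. exfalso.
      assert (Hm0 : Hh mu <= 0).
      { rewrite Hmu. unfold Rdiv. rewrite Rmult_assoc, (Rmult_comm (ybar - ys)), <- Rmult_assoc.
        assert (0 <= P1 mu * (beta * (rho + 2 * kappa)) * / (rho * (rho + kappa)) * (ys - ybar)).
        { apply Rmult_le_pos. left; exact Hcoef. lra. } lra. }
      destruct (Req_dec (Hh mu) 0) as [Hz|Hnz]. { apply Hzero in Hz. lra. }
      pose (x1 := Rmin mu x0).
      assert (Hx1 : x1 <= mu /\ x1 <= x0) by (split; [apply Rmin_l|apply Rmin_r]).
      assert (Hpos : 0 < Hh x1).
      { unfold Hh. rewrite HRt. pose proof (HP1 x1). pose proof (HP x1).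
        assert (0 <= (x0 - x1) / (rho + kappa)) by (apply Rdiv_le_0_compat; lra).
        assert (0 < P x1 / (rho + kappa)) by (apply Rdiv_lt_0_compat; lra). nra. }
      assert (Hx1m : x1 < mu) by (destruct (Req_dec x1 mu) as [E|E]; [rewrite E in Hpos; lra | lra]).
      destruct (IVT (fun x => - Hh x) x1 mu) as [z [Hz1 Hz2]].
      { intros x. apply continuity_pt_opp. apply CH. }
      lra. lra. lra.
      assert (z = xt) by (apply Hzero; lra). lra. }
    unfold F. rewrite HFt_end. lra.
Qed.
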